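(* Let $t\geq3$, let $A_1,\dots,A_k\in\Pi_n^{(t)}$, let $\epsilon_1,\dots,\epsilon_k$ be independent uniformly distributed $\{-1,1\}$-valued random variables, and let $R=\lceil\log_2 n\rceil$. Then for $p\geq1$, $$\mathbb{E}\Big[\Big\|\sum_{i=1}^k\epsilon_iA_i\Big\|_{\ell_p,\dots,\ell_p}\Big]\leq2^t\sum_{\mathbf r\in[R]^t}\frac{\mathbb{E}\Big[\max\Big\{\Big(\sum_{i=1}^k\epsilon_iA_i\Big)(\mathbf x): \mathbf x\in H^n_{2^{r_1}}\times\cdots\times H^n_{2^{r_t}}\Big\}\Big]}{2^{(r_1+\cdots+r_t)/p}}.$$
   Context: For $d\in\mathbb{N}$, $H^n_d=\{x\in\{-1,0,1\}^n: \|x\|_{\ell_0}=\min\{d,n\}\}$, where $\|x\|_{\ell_0}$ is the number of nonzero entries; for $\mathbf x=(x[1],\dots,x[t])$ we write $A(\mathbf x)=A(x[1],\dots,x[t])$. $\Pi_n^{(t)}$ is the set of $t$-linear forms $A$ on $\mathbb{R}^n$ such that $|A(e_{s_1},\dots,e_{s_t})|$ summed over all indices except one fixed coordinate (i.e. $|A|(\mathbf 1,\dots,e_s,\dots,\mathbf 1)$, with $|A|$ the form with entries $|A(e_{s_1},\dots,e_{s_t})|$) is at most $1$ for every $s\in[n]$ and every position. $\|A\|_{\ell_p,\dots,\ell_p}=\sup\{A(x[1],\dots,x[t])/(\|x[1]\|_{\ell_p}\cdots\|x[t]\|_{\ell_p}): x[i]\neq0\}$. $[R]=\{1,\dots,R\}$.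 *)

(* Defs.v *)
From mathcomp Require Import all_boot all_order all_algebra.
From mathcomp Require Import boolp classical_sets reals exp.
Set Implicit Arguments. Unset Strict Implicit. Unset Printing Implicit Defensive.
Import Order.TTheory GRing.Theory Num.Theory.
Local Open Scope ring_scope.
Local Open Scope classical_set_scope.

(* A t-linear mlform on R^n, given by its coefficients A(e_{s_1},...,e_{s_t}),
   indexed by s : 'I_t -> 'I_n. *)
Definition mlform (R : realType) (n t : nat) := {ffun {ffun 'I_t -> 'I_n} -> R}.

Definition eval_form (R : realType) n t (A : mlform R n t) (x : 'I_t -> 'I_n -> R) : R :=
  \sum_(s : {ffun 'I_t -> 'I_n}) A s * \prod_(j < t) x j (s j).

(* A in Pi_n^(t): |A|(1,..,e_s,..,1) <= 1 for every position j and every s. *)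
Definition in_Pi (R : realType) n t (A : mlform R n t) : Prop :=
  forall (j : 'I_t) (s : 'I_n),
    \sum_(sg : {ffun 'I_t -> 'I_n} | sg j == s) `|A sg| <= 1.

Definition lpnorm (R : realType) n (p : R) (v : 'I_n -> R) : R :=
  (\sum_(i < n) `|v i| `^ p) `^ p^-1.

Definition opnorm (R : realType) n t (p : R) (A : mlform R n t) : R :=
  sup [set y | exists x : 'I_t -> 'I_n -> R,
        (forall j, exists i, x j i != 0) /\
        y = eval_form A x / \prod_(j < t) lpnorm p (x j)].

Definition inH (R : realType) n (d : nat) (v : 'I_n -> R) : Prop :=
  (forall i, v i \in [:: -1; 0; 1]) /\ #|[pred i | v i != 0]| = minn d n.

(* max { A(x) : x in H^n_{2^{r_1}} x ... x H^n_{2^{r_t}} } (finite nonempty set) *)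
Definition maxH (R : realType) n t (A : mlform R n t) (r : 'I_t -> nat) : R :=
  sup [set y | exists x : 'I_t -> 'I_n -> R,
        (forall j, inH (2 ^ r j) (x j)) /\ y = eval_form A x].

Definition signsum (R : realType) n t k (eps : {ffun 'I_k -> bool})
  (As : 'I_k -> mlform R n t) : mlform R n t :=
  [ffun sg => \sum_(i < k) (if eps i then 1 else -1) * As i sg].

Definition Esign (R : realType) k (f : {ffun 'I_k -> bool} -> R) : R :=
  (2 ^+ k)^-1 * \sum_(eps : {ffun 'I_k -> bool}) f eps.

(* Main.v *)
Require Import Defs.
From mathcomp Require Import all_boot all_order all_algebra.
From mathcomp Require Import boolp classical_sets reals exp.
From mathcomp Require Import ring lra.
Import Order.TTheory GRing.Theory Num.Theory.
Local Open Scope ring_scope.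
Set Implicit Arguments. Unset Strict Implicit. Unset Printing Implicit Defensive.

Lemma superset_card (T : finType) (S : {set T}) m :
  (#|S| <= m)%N -> (m <= #|T|)%N -> exists U : {set T}, S \subset U /\ #|U| = m.
Proof.
elim: m => [|m IH] hS hm.
  exists S; split => //; apply/eqP; by rewrite -leqn0.
case: (ltngtP #|S| m.+1) => [hlt||heq]; last first.
- by exists S; split.
- by rewrite ltnNge hS.
have [U [sU cU]] := IH hlt (ltnW hm).
have : (0 < #|~: U|)%N.
  have := cardsCs U; rewrite cU => h; move: hm; rewrite h.
  case: #|~: U| => //; by rewrite subn0 ltnn.
case/card_gt0P => x; rewrite inE => xU.
exists (x |: U); split.
  by apply/fintype.subsetP => y yS; rewrite !inE (fintype.subsetP sU y yS) orbT.
by rewrite cardsU1 xU cU.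
Qed.

Section S1.
Variable R : realType.
Variable n : nat.

Lemma lin_step (c v : 'I_n -> R) (S : {set 'I_n}) d :
  (#|S| <= minn d n)%N -> (forall i, `|v i| <= 1) -> (forall i, i \notin S -> v i = 0) ->
  exists h : 'I_n -> R, inH d h /\ \sum_i c i * v i <= \sum_i c i * h i.
Proof.
move=> hS hv h0.
have [T [sT cT]] : exists U : {set 'I_n}, S \subset U /\ #|U| = minn d n.
  by apply: superset_card => //; rewrite card_ord geq_minr.
pose F (U : {set 'I_n}) := \sum_(i in U) `|c i|.
pose P (U : {set 'I_n}) := #|U| == minn d n.
have PT : P T by rewrite /P cT.
case: (@Order.TotalTheory.arg_maxP _ R _ T P F PT) => Tm PTm maxT.
pose h i : R := if i \in Tm then (if 0 <= c i then 1 else -1) else 0.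
exists h; split.
  split.
    by move=> i; rewrite /h; case: ifP => _; [case: ifP => _|]; rewrite !inE eqxx ?orbT.
  rewrite -(eqP PTm); apply: eq_card => i; rewrite /h inE.
  case: (i \in Tm) => /=; last by rewrite eqxx.
  by case: ifP => _; rewrite ?oppr_eq0 oner_eq0.
have -> : \sum_i c i * h i = F Tm.
  rewrite /F [in RHS]big_mkcond /=; apply: eq_bigr => i _; rewrite /h.
  case: ifP => _; last by rewrite mulr0.
  case: lerP => hc; first by rewrite mulr1 ger0_norm.
  by rewrite mulrN1 ltr0_norm.
apply: (le_trans _ (maxT T PT)).
rewrite /F [in X in _ <= X]big_mkcond /=; apply: ler_sum => i _.
case: ifP => iT.
  apply: (le_trans (ler_norm _)); rewrite normrM.
  by rewrite -[X in _ <= X]mulr1 ler_wpM2l.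
have iS : i \notin S by apply/negP => iS; move: iT; rewrite (fintype.subsetP sT i iS).
by rewrite h0 // mulr0.
Qed.

End S1.

Section S2.
Variable R : realType.
Variables n t : nat.
Implicit Types (A : mlform R n t) (x : 'I_t -> 'I_n -> R).

Definition coef A x (j0 : 'I_t) (i : 'I_n) : R :=
  \sum_(s : {ffun 'I_t -> 'I_n} | s j0 == i) A s * \prod_(j < t | j != j0) x j (s j).

Lemma eval_lin A x j0 : eval_form A x = \sum_i coef A x j0 i * x j0 i.
Proof.
rewrite /eval_form (partition_big (fun s : {ffun 'I_t -> 'I_n} => s j0) xpredT) //=.
apply: eq_bigr => i _; rewrite /coef mulr_suml; apply: eq_bigr => s /eqP <-.
by rewrite (bigD1 j0) //= mulrCA mulrC.
Qed.

Lemma coef_eq A x x' j0 : (forall j, j != j0 -> x' j = x j) -> coef A x' j0 =1 coef A x j0.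
Proof.
move=> h i; apply: eq_bigr => s _; congr (_ * _); apply: eq_bigr => j /h -> //.
Qed.

Lemma eval_scale A (a : 'I_t -> R) (v : 'I_t -> 'I_n -> R) :
  eval_form A (fun j i => a j * v j i) = (\prod_j a j) * eval_form A v.
Proof.
rewrite /eval_form mulr_sumr; apply: eq_bigr => s _.
by rewrite big_split /= mulrCA.
Qed.

Lemma eval_expand A (K : nat) (y : 'I_t -> 'I_K -> 'I_n -> R) :
  eval_form A (fun j i => \sum_(k < K) y j k i) =
  \sum_(r : {ffun 'I_t -> 'I_K}) eval_form A (fun j => y j (r j)).
Proof.
rewrite /eval_form exchange_big /=; apply: eq_bigr => s _.
by rewrite (bigA_distr_bigA (fun j k => y j k (s j))) mulr_sumr.
Qed.

Definition inK (d : nat) (v : 'I_n -> R) : Prop :=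
  (forall i, `|v i| <= 1) /\ exists S : {set 'I_n}, (#|S| <= minn d n)%N /\ forall i, i \notin S -> v i = 0.

Lemma inH_norm d (v : 'I_n -> R) : inH d v -> forall i, `|v i| <= 1.
Proof.
by case=> h _ i; move: (h i); rewrite !inE => /or3P [] /eqP ->; rewrite ?normrN ?normr1 ?normr0.
Qed.

Lemma inH_K d (v : 'I_n -> R) : inH d v -> inK d v.
Proof.
move=> hv; split; first by move=> i; apply: (inH_norm hv).
exists [set i | v i != 0]; split.
  case: hv => _ <-; rewrite leq_eqVlt; apply/orP; left; apply/eqP.
  by apply: eq_card => i; rewrite inE.
by move=> i; rewrite inE negbK => /eqP.
Qed.

Lemma maxH_ub A (d : 'I_t -> nat) x : (forall j, inH (2 ^ d j) (x j)) -> eval_form A x <= maxH A d.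
Proof.
move=> hx; apply: sup_upper_bound; last by exists x.
split; first by exists (eval_form A x), x.
exists (\sum_s `|A s|) => y [z [hz ->]].
apply: (le_trans (ler_norm _)); apply: (le_trans (ler_norm_sum _ _ _)).
apply: ler_sum => s _; rewrite normrM -[X in _ <= X]mulr1 ler_wpM2l //.
rewrite normr_prod; apply: prodr_ile1 => j _.
by rewrite normr_ge0 /=; apply: (inH_norm (hz j)).
Qed.

Lemma repl A (d : 'I_t -> nat) m : (m <= t)%N -> forall x,
  (forall j, inK (2 ^ d j) (x j)) -> (forall j : 'I_t, (m <= j)%N -> inH (2 ^ d j) (x j)) ->
  eval_form A x <= maxH A d.
Proof.
elim: m => [|m IH] hm x hK hH.
  by apply: maxH_ub => j; apply: hH.
pose j0 : 'I_t := Ordinal hm.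
have [hv [S [hS h0]]] := hK j0.
have [h [hh hle]] := lin_step (coef A x j0) hS hv h0.
pose x' := fun j => if j == j0 then h else x j.
apply: (le_trans _ (IH (ltnW hm) x' _ _)).
- rewrite (eval_lin A x j0) (eval_lin A x' j0).
  have -> : \sum_i coef A x' j0 i * x' j0 i = \sum_i coef A x j0 i * h i.
    apply: eq_bigr => i _; rewrite (@coef_eq A x x') ?/x' ?eqxx // => j /negbTE hj.
    by rewrite hj.
  exact: hle.
- move=> j; rewrite /x'; case: eqP => [->|_]; [apply: inH_K hh | apply: hK].
- move=> j hj; rewrite /x'; case: eqP => [->|hj0] //=; apply: hH.
  rewrite ltn_neqAle hj andbT; apply/eqP => e; apply: hj0; apply: val_inj => /=.
  by rewrite e.
Qed.

End S2.

Section S3.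
Variable R : realType.
Variables n : nat.
Variable p : R.
Hypothesis hp : 1 <= p.
Hypothesis hn : (1 < n)%N.

Local Notation Rl := (up_log 2 n).

Lemma Rl_gt0 : (0 < Rl)%N.
Proof. by rewrite up_log_gt0 hn. Qed.

Definition levP (a S : R) (m : nat) : bool := (Rl.-1 <= m)%N || (S < a * 2 ^+ m.+1).
Lemma levP_ex a S : exists m, levP a S m.
Proof. by exists Rl.-1; rewrite /levP leqnn. Qed.
Definition lev a S : nat := ex_minn (levP_ex a S).

Lemma lev_le a S : (lev a S <= Rl.-1)%N.
Proof. by rewrite /lev; case: ex_minnP => m _ /(_ Rl.-1); apply; rewrite /levP leqnn. Qed.

Lemma lev_lt a S : (lev a S < Rl)%N.
Proof. by apply: (leq_ltn_trans (lev_le a S)); rewrite prednK ?Rl_gt0. Qed.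

Lemma lev_lo a S : a <= S -> a * 2 ^+ (lev a S) <= S.
Proof.
rewrite /lev; case: ex_minnP => m _ minm haS.
case: m minm => [|m] minm; first by rewrite expr0 mulr1.
have : ~~ levP a S m by apply/negP => /minm; rewrite ltnn.
by rewrite /levP negb_or -leNgt => /andP [].
Qed.

Lemma lev_hi a S : (lev a S < Rl.-1)%N -> S < a * 2 ^+ (lev a S).+1.
Proof.
rewrite /lev; case: ex_minnP => m Pm _ hm.
by move: Pm; rewrite /levP leqNgt hm.
Qed.

Definition aa (v : 'I_n -> R) i : R := `|v i| `^ p.
Definition SS (v : 'I_n -> R) : R := \sum_i aa v i.
Definition lv (v : 'I_n -> R) i : nat := lev (aa v i) (SS v).
Definition w (k : nat) : R := 2 `^ (k.+1%:R / p).

Lemma p_gt0 : 0 < p. Proof. by apply: lt_le_trans hp. Qed.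

Lemma w_gt0 k : 0 < w k. Proof. by apply: powR_gt0. Qed.

Lemma aa_ge0 v i : 0 <= aa v i. Proof. exact: powR_ge0. Qed.

Lemma SS_gt0 v : (exists i, v i != 0) -> 0 < SS v.
Proof.
case=> i0 hi0; rewrite /SS (bigD1 i0) //=.
have ha : 0 < aa v i0 by apply: powR_gt0; rewrite normr_gt0.
apply: (lt_le_trans ha); rewrite lerDl.
by apply: sumr_ge0 => i _; apply: aa_ge0.
Qed.

Lemma aa_le v i : aa v i <= SS v.
Proof.
rewrite /SS (bigD1 i) //= lerDl; by apply: sumr_ge0 => j _; apply: aa_ge0.
Qed.

Lemma lpnormE v : lpnorm p v = SS v `^ p^-1.
Proof. by []. Qed.

Lemma two_neq0 : (2 : R) != 0. Proof. by rewrite pnatr_eq0. Qed.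

Lemma val_bound v i : `|v i| * w (lv v i) <= 2 * lpnorm p v.
Proof.
have p0 := p_gt0.
set k := lv v i.
have h1 : aa v i * 2 ^+ k <= SS v by apply: lev_lo; apply: aa_le.
have h2 : (aa v i * 2 ^+ k) `^ p^-1 <= SS v `^ p^-1.
  apply: ge0_ler_powR => //; first by rewrite invr_ge0 ltW.
    by rewrite nnegrE mulr_ge0 ?aa_ge0 // exprn_ge0.
  by rewrite nnegrE (le_trans _ h1) // mulr_ge0 ?aa_ge0 // exprn_ge0.
rewrite powRM ?aa_ge0 ?exprn_ge0 // in h2.
have e1 : aa v i `^ p^-1 = `|v i|.
  by rewrite /aa -powRrM mulfV ?gt_eqF // powRr1.
have e2 : (2 ^+ k : R) `^ p^-1 = 2 `^ (k%:R * p^-1).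
  by rewrite -powR_mulrn // powRrM.
rewrite e1 e2 in h2.
have e3 : w k = 2 `^ (k%:R * p^-1) * 2 `^ p^-1.
  rewrite /w -powRD; last by apply/implyP => _; rewrite two_neq0.
  by congr (_ `^ _); rewrite -natr1 mulrDl mul1r.
rewrite e3 mulrA lpnormE mulrC.
apply: ler_pM => //; rewrite ?mulr_ge0 ?powR_ge0 //.
by apply: ler1_powR => //; [rewrite ler1n | rewrite invf_le1].
Qed.

Lemma count_bound v (k : nat) : (exists i, v i != 0) -> (k < Rl)%N ->
  (#|[set i | lv v i == k]| <= minn (2 ^ k.+1) n)%N.
Proof.
move=> hv hk; set L := [set i | lv v i == k].
rewrite leq_min; apply/andP; split; last first.
  by rewrite -[X in (_ <= X)%N]card_ord max_card.
case: (ltnP k Rl.-1) => hk'.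
  have S0 := SS_gt0 hv.
  have : #|L|%:R * SS v <= 2 ^+ k.+1 * SS v.
    rewrite mulr_natl -sumr_const.
    apply: (@le_trans _ _ (\sum_(i in L) aa v i * 2 ^+ k.+1)).
      apply: ler_sum => i; rewrite inE => /eqP e; apply: ltW.
      by rewrite -e; apply: lev_hi; rewrite -/(lv v i) e.
    rewrite -mulr_suml mulrC ler_wpM2l ?exprn_ge0 //.
    rewrite /SS [X in _ <= X](bigID (fun i => i \in L)) /= lerDl.
    by apply: sumr_ge0 => i _; apply: aa_ge0.
  by rewrite ler_pM2r // -natrX ler_nat.
apply: (leq_trans (max_card _)); rewrite card_ord.
apply: (leq_trans (up_logP n (isT : (1 < 2)%N))).
by apply: leq_pexp2l => //; rewrite -ltnS prednK ?Rl_gt0 in hk'.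
Qed.

End S3.

Section S4.
Variable R : realType.
Variables n t : nat.
Variable p : R.
Hypothesis hp : 1 <= p.
Hypothesis hn : (1 < n)%N.

Local Notation Rl := (up_log 2 n).

Lemma powR2_sum (f : 'I_t -> R) : 2 `^ (\sum_j f j) = \prod_j 2 `^ f j.
Proof.
apply: (big_morph (powR 2) _ (powRr0 2)) => a b.
by rewrite powRD //; apply/implyP => _; rewrite (two_neq0 R).
Qed.

Lemma W_eq (r : 'I_t -> nat) :
  2 `^ ((\sum_(j < t) (r j).+1)%:R / p) = \prod_j w p (r j).
Proof. by rewrite natr_sum mulr_suml powR2_sum. Qed.

Lemma main_det (A : mlform R n t) (x : 'I_t -> 'I_n -> R) :
  (forall j, exists i, x j i != 0) ->
  eval_form A x / \prod_j lpnorm p (x j) <=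
  2 ^+ t * \sum_(r : {ffun 'I_t -> 'I_Rl})
     maxH A (fun j => (r j).+1) / (2 `^ ((\sum_(j < t) (r j).+1)%:R / p)).
Proof.
move=> hx.
pose N j := lpnorm p (x j).
have Npos j : 0 < N j by rewrite /N lpnormE powR_gt0 // SS_gt0.
pose lvo j i : 'I_Rl := Ordinal (lev_lt hn (aa p (x j) i) (SS p (x j))).
pose v j (k : 'I_Rl) i := if lv p (x j) i == k then x j i * w p k / (2 * N j) else 0.
have decomp : x = (fun j i => \sum_(k < Rl) (2 * N j / w p k) * v j k i).
  apply/funext => j; apply/funext => i.
  rewrite (bigD1 (lvo j i)) //= big1 ?addr0.
    rewrite /v /= eqxx.
    have := w_gt0 p (lvo j i); have := Npos j => h1 h2.
    field; apply/andP; split; by rewrite gt_eqF // ?mulr_gt0.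
  move=> k hk; rewrite /v; case: eqP => [e|_]; last by rewrite mulr0.
  by case/eqP: hk; apply: val_inj; rewrite /= -e.
have ex : eval_form A x = eval_form A (fun j i => \sum_(k < Rl) (2 * N j / w p k) * v j k i).
  by rewrite -decomp.
rewrite ex eval_expand ler_pdivrMr; last by apply: prodr_gt0 => j _; apply: (Npos j).
have hM : forall r : {ffun 'I_t -> 'I_Rl},
  eval_form A (fun j => (fun (k : 'I_Rl) i => 2 * N j / w p k * v j k i) (r j)) <=
  (\prod_j (2 * N j / w p (r j))) * maxH A (fun j => (r j).+1).
  move=> r.
  rewrite [X in X <= _](_ : _ = (\prod_j (2 * N j / w p (r j))) * eval_form A (fun j => v j (r j))); last first.
    by apply: (eval_scale A (fun j => 2 * N j / w p (r j)) (fun j => v j (r j))).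
  rewrite ler_wpM2l //; first by apply: prodr_ge0 => j _; rewrite ?mulr_ge0 ?invr_ge0 ?ltW ?w_gt0 ?Npos.
  apply: (@repl _ _ _ A (fun j => (r j).+1) t (leqnn t)); last first.
    by move=> j; rewrite leqNgt ltn_ord.
  move=> j; split.
    move=> i; rewrite /v; case: eqP => [e|_]; last by rewrite normr0.
    have h2 : 0 < 2 * N j by rewrite mulr_gt0 ?Npos.
    rewrite normf_div ler_pdivrMr ?normr_gt0 ?gt_eqF // mul1r normrM.
    rewrite (gtr0_norm (w_gt0 _ _)) (gtr0_norm h2) -e.
    by apply: val_bound hp (x j) i.
  exists [set i | lv p (x j) i == r j]; split.
    by apply: (count_bound p hn (hx j) (ltn_ord (r j))).
  by move=> i; rewrite inE => /negbTE h; rewrite /v h.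
apply: (le_trans (ler_sum _ (fun r _ => hM r))).
rewrite mulr_sumr mulr_suml; apply: ler_sum => r _.
rewrite (W_eq (fun j => r j)) big_split /= big_split /= prodfV prodr_const card_ord /N.
rewrite le_eqVlt; apply/orP; left; apply/eqP; ring.
Qed.

Lemma opnorm_le (A : mlform R n t) :
  opnorm p A <= 2 ^+ t * \sum_(r : {ffun 'I_t -> 'I_Rl})
     maxH A (fun j => (r j).+1) / (2 `^ ((\sum_(j < t) (r j).+1)%:R / p)).
Proof.
apply: ge_sup.
  pose i0 : 'I_n := Ordinal (ltnW hn).
  exists (eval_form A (fun _ _ => 1) / \prod_(j < t) lpnorm p (fun _ : 'I_n => 1)), (fun _ _ => 1).
  by split => // j; exists i0; rewrite oner_eq0.
by move=> y [x [hx ->]]; apply: main_det.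
Qed.

End S4.

Theorem lemma4p4 (R : realType) (n t k : nat) (p : R) (As : 'I_k -> mlform R n t) :
  (3 <= t)%N -> (1 < n)%N -> 1 <= p -> (forall i, in_Pi (As i)) ->
  Esign (fun eps => opnorm p (signsum eps As)) <=
  2 ^+ t * \sum_(r : {ffun 'I_t -> 'I_(up_log 2 n)})
     Esign (fun eps => maxH (signsum eps As) (fun j => (r j).+1))
       / (2 `^ ((\sum_(j < t) (r j).+1)%:R / p)).
Proof.
move=> _ hn hp _.
apply: (@le_trans _ _ (Esign (fun eps => 2 ^+ t * \sum_(r : {ffun 'I_t -> 'I_(up_log 2 n)})
     maxH (signsum eps As) (fun j => (r j).+1) / (2 `^ ((\sum_(j < t) (r j).+1)%:R / p))))).
  rewrite /Esign ler_wpM2l ?invr_ge0 ?exprn_ge0 //.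
  by apply: ler_sum => eps _; apply: opnorm_le.
rewrite le_eqVlt; apply/orP; left; apply/eqP.
rewrite /Esign -mulr_sumr mulrCA; congr (_ * _).
rewrite exchange_big mulr_sumr; apply: eq_bigr => r _.
by rewrite -mulr_suml mulrA.
Qed.
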